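(* Let $\Bbbk$ be a field, $m\in\mathbb N$, $K=\Bbbk[\sigma]/(\sigma^m)$ and $L=\Bbbk[\varepsilon]/(\varepsilon^{2m})$, with $K$ viewed as a subalgebra of $L$ via $\sigma=\varepsilon^2$. For $0\le j\le m$ let $K_j=K/(\sigma^j)$. Let $V$ be a $K$-module and $\tilde\theta:V\to L$ an injective $K$-linear map whose adjoint $L$-linear map $\theta:L\otimes_K V\to L$ is surjective. Then there exists $0\le j\le m$ such that $V\cong K\oplus K_j$. *)

(* Defs.v *)
From HB Require Import structures.
From mathcomp Require Import all_boot all_algebra.
Set Implicit Arguments. Unset Strict Implicit. Unset Printing Implicit Defensive.
Import GRing.Theory.
Local Open Scope ring_scope.

(* K sits in L via sigma |-> eps^2, so L as a K-module has sigma acting by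
     multiplication by 'X^2 (reduced mod 'X^(2m)).
   - K_j = K/(sigma^j) = k[sigma]/(sigma^j): polynomials of size <= j with
     sigma acting by p |-> trunc j ('X * p). *)

Definition trunc (F : fieldType) (n : nat) (p : {poly F}) : {poly F} :=
  p %% 'X^n.

(* The L-linear adjoint theta : L (x)_K V -> L, l (x) v |-> l * theta~(v),
   is surjective: every element of L is the image of a finite sum of pure
   tensors, i.e. is of the form sum_i l_i * theta~(v_i) computed in L. *)
Definition adjoint_surjective (F : fieldType) (V : lmodType F) (m : nat)
    (theta : V -> {poly F}) : Prop :=
  forall x : {poly F}, (size x <= 2 * m)%N ->
    exists r : seq ({poly F} * V),
      x = trunc (2 * m) (\sum_(c <- r) c.1 * theta c.2).

Definition iso_K_plus_Kj (F : fieldType) (V : lmodType F) (s : V -> V)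
    (m j : nat) : Prop :=
  exists f1 f2 : {linear V -> {poly F}},
    [/\ forall v, (size (f1 v) <= m)%N /\ (size (f2 v) <= j)%N,
        forall v, f1 (s v) = trunc m ('X * f1 v) /\
                  f2 (s v) = trunc j ('X * f2 v),
        forall v, f1 v = 0 -> f2 v = 0 -> v = 0 &
        forall p q : {poly F}, (size p <= m)%N -> (size q <= j)%N ->
          exists v, f1 v = p /\ f2 v = q].

(* Main.v *)
Require Import Defs.
From HB Require Import structures.
From mathcomp Require Import all_boot all_algebra.
From Stdlib Require Import Classical.
Import GRing.Theory.
Local Open Scope ring_scope.

Lemma tkMr (F : fieldType) n (a b : {poly F}) :
  take_poly n (a * take_poly n b) = take_poly n (a * b).
Proof. by rewrite !Pdiv.IdomainMonic.take_poly_modp modp_mul. Qed.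

Lemma tkMl (F : fieldType) n (a b : {poly F}) :
  take_poly n (take_poly n a * b) = take_poly n (a * b).
Proof. by rewrite mulrC tkMr mulrC. Qed.

Lemma tk_comp (F : fieldType) m (a : {poly F}) :
  take_poly m.*2 (a \Po 'X^2) = take_poly m a \Po 'X^2.
Proof.
apply/polyP => i; rewrite coef_take_poly !coef_comp_poly_Xn // coef_take_poly.
case: dvdnP => [[k ->]|]; last by case: ifP.
by rewrite mulnK // muln2 ltn_double.
Qed.

Lemma even_tk (F : fieldType) m (p : {poly F}) :
  even_poly (take_poly m.*2 p) = take_poly m (even_poly p).
Proof.
by apply/polyP => i; rewrite coef_even_poly !coef_take_poly ltn_double coef_even_poly.
Qed.

Lemma odd_tk (F : fieldType) m (p : {poly F}) :
  odd_poly (take_poly m.*2 p) = take_poly m (odd_poly p).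
Proof.
by apply/polyP => i; rewrite coef_odd_poly !coef_take_poly ltn_Sdouble coef_odd_poly.
Qed.

Lemma even_comp (F : fieldType) (a : {poly F}) : even_poly (a \Po 'X^2) = a.
Proof.
apply/polyP => i; rewrite coef_even_poly coef_comp_poly_Xn // -muln2 dvdn_mull //.
by rewrite mulnK.
Qed.

Lemma odd_comp (F : fieldType) (a : {poly F}) : odd_poly (a \Po 'X^2) = 0.
Proof.
apply/polyP => i; rewrite coef_odd_poly coef_comp_poly_Xn // coef0 dvdn2 /=.
by rewrite odd_double.
Qed.

Lemma tk_compX (F : fieldType) m (a : {poly F}) :
  take_poly m.*2 ((a \Po 'X^2) * 'X) = take_poly m.*2 ((take_poly m a \Po 'X^2) * 'X).
Proof. by rewrite -[LHS]tkMl tk_comp. Qed.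

Lemma inv_tk (F : fieldType) k (d : {poly F}) : d`_0 != 0 ->
  exists h, take_poly k (h * d) = take_poly k 1.
Proof.
move=> d0.
have cX : coprimep d 'X.
  by have := coprimep_XsubC d 0; rewrite polyC0 subr0 => ->; rewrite /root horner_coef0.
have /Bezout_eq1_coprimepP [[u1 u2] /= e] := coprimep_expr k cX.
exists u1; by rewrite -e take_polyD take_polyMXn_0 addr0.
Qed.

Lemma min_choice (P : nat -> Prop) m : exists r, (r <= m)%N /\
  (forall k, (k < r)%N -> ~ P k) /\ ((r < m)%N -> P r).
Proof.
elim: m => [|m [r [rm [A B]]]]; first by exists 0%N; split.
have [rlt|req] := ltnP r m.
  exists r; split; first exact: ltnW.
  by split => // _; apply: B.
have E : r = m by apply/eqP; rewrite eqn_leq rm req.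
subst r.
case: (classic (P m)) => Pm.
  by exists m; split; [exact: leqnSn | split].
exists m.+1; split => //; split; last by rewrite ltnn.
move=> k; rewrite ltnS leq_eqVlt => /orP [/eqP -> //|]; exact: A.
Qed.

Lemma evX2 (F : fieldType) (p : {poly F}) : even_poly ('X^2 * p) = 'X * even_poly p.
Proof.
by rewrite mulrC expr2 mulrA even_polyMX odd_polyMX mulrC.
Qed.

Lemma odX2 (F : fieldType) (p : {poly F}) : odd_poly ('X^2 * p) = 'X * odd_poly p.
Proof.
by rewrite mulrC expr2 mulrA odd_polyMX even_polyMX mulrC.
Qed.

Definition linwrap (F : fieldType) (V W : lmodType F) (f : V -> W) (_ : linear f) := f.
HB.instance Definition _ (F : fieldType) (V W : lmodType F) (f : V -> W) (H : linear f) :=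
  GRing.isLinear.Build F V W *:%R (@linwrap F V W f H) H.

Definition act (F : fieldType) (V : lmodType F) (s : V -> V) (p : {poly F}) v :=
  \sum_(i < size p) p`_i *: iter i s v.

Arguments act {F V}.

Lemma truncE (F : fieldType) n (p : {poly F}) : trunc n p = take_poly n p.
Proof. by rewrite /trunc Pdiv.IdomainMonic.take_poly_modp. Qed.

Lemma tktk (F : fieldType) n (p : {poly F}) : take_poly n (take_poly n p) = take_poly n p.
Proof. by rewrite take_poly_id // size_take_poly. Qed.

Lemma w_act (F : fieldType) (m : nat) (V : lmodType F) (s : {linear V -> V})
  (w : {linear V -> {poly F}}) :
  (forall v, w (s v) = take_poly m.*2 ('X^2 * w v)) ->
  (forall v, take_poly m.*2 (w v) = w v) ->
  forall p v, w (act s p v) = take_poly m.*2 ((p \Po 'X^2) * w v).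
Proof.
move=> Hs Htk.
have Hit : forall i v, w (iter i s v) = take_poly m.*2 ('X^2 ^+ i * w v).
  elim=> [|i IH] v.
    by rewrite /= expr0 mul1r Htk.
  by rewrite iterS Hs IH tkMr mulrA -exprS.
move=> p v; rewrite /act linear_sum.
under eq_bigr do rewrite linearZ Hit.
rewrite comp_polyE mulr_suml take_poly_sum; apply: eq_bigr => i _.
by rewrite -scalerAl take_polyZ.
Qed.

Lemma core (F : fieldType) (m : nat) (V : lmodType F) (s : {linear V -> V})
  (w : {linear V -> {poly F}}) (v0 : V) :
  (0 < m)%N ->
  (forall v, take_poly m.*2 (w v) = w v) ->
  (forall v, w (s v) = take_poly m.*2 ('X^2 * w v)) ->
  w v0 = 1 ->
  (forall v, w v = 0 -> v = 0) ->
  exists2 j, (j <= m)%N & iso_K_plus_Kj s m j.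
Proof.
move=> m0 Htk Hs wv0 Hinj.
have Hact := @w_act F m V s w Hs Htk.
have [r [rm [A B]]] := min_choice (fun k => exists v, (odd_poly (w v))`_k != 0) m.
have Az : forall v k, (k < r)%N -> (odd_poly (w v))`_k = 0.
  move=> v k kr; apply/eqP/negPn/negP => H; apply: (A k kr); by exists v.
have wev : forall v, even_poly (w v) = take_poly m (even_poly (w v)).
  by move=> v; rewrite -{1}Htk even_tk.
have wod : forall v, odd_poly (w v) = take_poly m (odd_poly (w v)).
  by move=> v; rewrite -{1}Htk odd_tk.
have [v1 Hv1] : exists v1, w v1 = take_poly m.*2 (('X^r \Po 'X^2) * 'X).
  have [rlt|rge] := ltnP r m; last first.
    have -> : r = m by apply/eqP; rewrite eqn_leq rm rge.
    exists 0; rewrite linear0 comp_Xn_poly -exprM mul2n mulrC.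
    by rewrite take_polyMXn_0.
  have [v' Hv'] := B rlt.
  set d := odd_poly (w v').
  have td : take_poly r d = 0.
    apply/polyP => i; rewrite coef_take_poly coef0.
    by case: ifP => // ir; apply: Az.
  have dE : d = drop_poly r d * 'X^r.
    by rewrite -{1}(poly_take_drop r d) td add0r.
  have [h Hh] : exists h, take_poly m (h * drop_poly r d) = take_poly m 1.
    by apply: inv_tk; rewrite coef_drop_poly add0n.
  pose v'' := v' - act s (even_poly (w v')) v0.
  have Hv'' : w v'' = take_poly m.*2 ((d \Po 'X^2) * 'X).
    rewrite /v'' linearB Hact wv0 mulr1 -{1}Htk -linearB /=.
    by rewrite -{1}(poly_even_odd (w v')) addrAC subrr add0r.
  have E : take_poly m (h * d) = take_poly m 'X^r.
    by rewrite dE mulrA -tkMl Hh tkMl mul1r.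
  exists (act s h v'').
  by rewrite Hact Hv'' tkMr mulrA -comp_polyM [LHS]tk_compX E -tk_compX.
pose f1 v := take_poly m (even_poly (w v)).
pose f2 v := take_poly (m - r) (drop_poly r (odd_poly (w v))).
have lf1 : linear f1.
  by move=> a x y; rewrite /f1 linearP even_polyD even_polyZ take_polyD take_polyZ.
have lf2 : linear f2.
  move=> a x y; rewrite /f2 linearP odd_polyD odd_polyZ drop_polyD drop_polyZ.
  by rewrite take_polyD take_polyZ.
exists (m - r)%N; first exact: leq_subr.
exists (@linwrap F V _ f1 lf1), (@linwrap F V _ f2 lf2); split => /=.
- by move=> v; rewrite /linwrap /f1 /f2; split; exact: size_take_poly.
- move=> v; rewrite /linwrap /f1 /f2 !truncE Hs; split.
    by rewrite even_tk tktk tkMr evX2.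
  rewrite odd_tk odX2 tkMr.
  apply/polyP => i; rewrite !coef_take_poly coef_drop_poly coef_take_poly !coefXM.
  case: ifP => ij //.
  have -> : (i + r < m)%N by rewrite addnC -ltn_subRL.
  case: i ij => [|i] ij /=.
    rewrite add0n; case: eqP => // /eqP r0; apply: Az.
    by rewrite prednK // lt0n.
  by rewrite coef_drop_poly.
- move=> v; rewrite /linwrap /f1 /f2 => H1 H2.
  apply: Hinj.
  have E0 : even_poly (w v) = 0 by rewrite wev.
  have O0 : odd_poly (w v) = 0.
    have D0 : drop_poly r (odd_poly (w v)) = 0.
      rewrite -H2 take_poly_id // size_drop_poly leq_sub2r //.
      by have := size_take_poly m (odd_poly (w v)); rewrite -wod.
    have T0 : take_poly r (odd_poly (w v)) = 0.
      apply/polyP => i; rewrite coef_take_poly coef0.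
      by case: ifP => // ir; apply: Az.
    by rewrite -(poly_take_drop r (odd_poly (w v))) T0 D0 mul0r addr0.
  by rewrite -(poly_even_odd (w v)) E0 O0 !comp_poly0 mul0r addr0.
- move=> p q sp sq; exists (act s p v0 + act s q v1); rewrite /linwrap /f1 /f2.
  have Ew : w (act s p v0 + act s q v1) =
      take_poly m.*2 (p \Po 'X^2 + ((q * 'X^r) \Po 'X^2) * 'X).
    by rewrite linearD !Hact wv0 mulr1 Hv1 tkMr mulrA -comp_polyM take_polyD.
  rewrite Ew even_tk odd_tk even_polyD odd_polyD even_polyMX odd_polyMX.
  rewrite !even_comp !odd_comp mul0r addr0 add0r !tktk take_poly_id //; split => //.
  by rewrite take_polyMXn drop_polyMXn_id tktk take_poly_id.
Qed.

Theorem lemma3p3 (F : fieldType) (m : nat) (V : lmodType F)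
    (s : {linear V -> V}) (theta : {linear V -> {poly F}}) :
  (forall v, iter m s v = 0) ->
  (forall v, (size (theta v) <= 2 * m)%N) ->
  (forall v, theta (s v) = trunc (2 * m) ('X^2 * theta v)) ->
  injective theta ->
  adjoint_surjective m theta ->
  exists2 j, (j <= m)%N & iso_K_plus_Kj s m j.
Proof.
move=> _ Hsize Hs Hinj Hadj.
have Htk : forall v, take_poly m.*2 (theta v) = theta v.
  by move=> v; rewrite take_poly_id // -mul2n.
have Hs' : forall v, theta (s v) = take_poly m.*2 ('X^2 * theta v).
  by move=> v; rewrite Hs truncE mul2n.
have [m0|m0] := posnP m.
  subst m.
  have l0 : linear (fun _ : V => (0 : {poly F})) by move=> a x y; rewrite scaler0 addr0.
  exists 0%N => //.
  exists (@linwrap F V _ _ l0), (@linwrap F V _ _ l0); split; rewrite /linwrap.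
  - by move=> v; rewrite size_poly0.
  - by move=> v; rewrite truncE !take_poly0l.
  - move=> v _ _; apply: Hinj; rewrite linear0.
    by apply/size_poly_leq0P; rewrite -(muln0 2); exact: Hsize.
  - move=> p q /size_poly_leq0P -> /size_poly_leq0P ->; by exists 0.
have [[v0 Hv0]|Hno] := classic (exists v, (theta v)`_0 != 0); last first.
  have Hz : forall v, (theta v)`_0 = 0.
    by move=> v; apply/eqP/negPn/negP => H; apply: Hno; exists v.
  have s1 : (size (1%R : {poly F}) <= 2 * m)%N by rewrite size_poly1 muln_gt0 m0.
  have [r e] := Hadj 1%R s1.
  have := congr1 (fun p : {poly F} => p`_0) e.
  rewrite coef1 /= truncE coef_take_poly muln_gt0 m0 /= coef_sum big1.
    by move/eqP; rewrite oner_eq0.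
  by move=> c _; rewrite coef0M Hz mulr0.
have [g Hg] := @inv_tk F m.*2 _ Hv0.
have Hg1 : take_poly m.*2 (g * theta v0) = 1.
  by rewrite Hg take_poly_id // size_poly1 double_gt0.
pose w v := take_poly m.*2 (g * theta v).
have lw : linear w.
  by move=> a x y; rewrite /w linearP mulrDr take_polyD -scalerAr take_polyZ.
have wE : forall v, (@linwrap F V _ w lw : {linear V -> {poly F}}) v = take_poly m.*2 (g * theta v) by [].
apply: (@core F m V s (@linwrap F V _ w lw) v0 m0) => [v|v||v]; rewrite ?wE.
- by rewrite tktk.
- by rewrite Hs' !tkMr mulrCA.
- exact: Hg1.
- move=> H; apply: Hinj; rewrite linear0.
  have -> : theta v = take_poly m.*2 (theta v0 * take_poly m.*2 (g * theta v)).
    by rewrite tkMr mulrA [theta v0 * g]mulrC -tkMl Hg1 mul1r Htk.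
  by rewrite H mulr0 take_poly0r.
Qed.
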